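(* Let $k$ be a field of characteristic zero and $f,g\in k[x,y,z]$. Suppose $\gcd(d(L(f)),d(L(g)))\in k[x]\setminus k$, $g$ is primitive and $g(x,0,0)=0$. Assume there exist non-negative integers $p,q$ with $(p,q)\ne(0,0)$ such that, for the grading $\deg y=p$, $\deg z=q$, the polynomial $\overline f$ is primitive and $\deg\overline f>\deg\overline g$. Then there is no $k[x]$-automorphism $\zeta$ of $k[x,y,z]$ with $\zeta(y)=u_1(v_0g+F_0(f))$ for any $u_1,v_0\in k(x)$ and $F_0\in k(x)[t]$.
   Context: Polynomials in $k[x,y,z]$ (or $k(x)[y,z]$) are regarded as polynomials in $y,z$ with coefficients in $k[x]$ (or $k(x)$). For $h\in k[x,y,z]$, $d(h)$ is the greatest common divisor in $k[x]$ of the coefficients of $h$ as a polynomial in $y,z$; $h$ is primitive if $d(h)=1$ (up to units). $L(h)$ is the sum of the terms of $h$ of total degree exactly $1$ in $y,z$. For the $\mathbb Z$-grading with $\deg y=p$, $\deg z=q$, $\overline h$ is the sum of the terms of $h$ of highest degree, and $\deg\overline h$ is that degree. *)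

(* Defs.v *)
From HB Require Import structures.
From mathcomp Require Import all_boot all_order all_algebra.
From mathcomp Require Import fraction.
From mathcomp Require Import mpoly.
Set Implicit Arguments. Unset Strict Implicit. Unset Printing Implicit Defensive.
Import Order.TTheory GRing.Theory.
Local Open Scope ring_scope.

(* k[x,y,z] is represented as {mpoly {poly k}[2]}: polynomials in the two
   variables y = 'X_yvar, z = 'X_zvar with coefficients in k[x] = {poly k}.
   k(x)[y,z] is {mpoly {fraction {poly k}}[2]}. *)

Definition yvar : 'I_2 := ord0.
Definition zvar : 'I_2 := ord_max.

Section Defs.
Variable k : fieldType.
Notation R := {mpoly {poly k}[2]}.
Notation K := {fraction {poly k}}.
Notation RK := {mpoly K[2]}.

Definition dcont (h : R) : {poly k} := \big[@gcdp k/0]_(m <- msupp h) h@_m.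

Definition primitive (h : R) : Prop := dcont h %= 1.

Definition linpart (h : R) : R :=
  \sum_(m <- msupp h | mdeg m == 1%N) h@_m *: 'X_[m].

Definition mwdeg (p q : nat) (m : 'X_{1..2}) : nat := (p * m yvar + q * m zvar)%N.

Definition wdeg (p q : nat) (h : R) : nat := \max_(m <- msupp h) mwdeg p q m.

Definition wtop (p q : nat) (h : R) : R :=
  \sum_(m <- msupp h | mwdeg p q m == wdeg p q h) h@_m *: 'X_[m].

Definition kx_automorphism (zeta : R -> R) : Prop :=
  [/\ forall a b, zeta (a + b) = zeta a + zeta b,
      forall a b, zeta (a * b) = zeta a * zeta b,
      zeta 1 = 1,
      forall c : {poly k}, zeta (c%:MP) = c%:MP
    & bijective zeta].

Definition toK (h : R) : RK := map_mpoly (fun c : {poly k} => @tofrac _ c) h.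

Definition peval (F0 : {poly K}) (f : RK) : RK :=
  \sum_(i < size F0) F0`_i *: f ^+ i.

End Defs.

(* Main.v *)
Require Import Defs.
From HB Require Import structures.
From mathcomp Require Import all_boot all_order all_algebra all_field.
From mathcomp Require Import fraction generic_quotient qpoly qfpoly.
From mathcomp Require Import mpoly.
From mathcomp Require Import ring.
From Stdlib Require Import Classical.
Import Order.TTheory GRing.Theory.
Local Open Scope ring_scope.

Lemma sum_pick (T : eqType) (A : nzRingType) (r : seq T) (F : T -> A) m0 :
  uniq r -> \sum_(m <- r) F m * (m == m0)%:R = if m0 \in r then F m0 else 0.
Proof.
elim: r => [|x r IH] /=; first by rewrite big_nil.
case/andP=> xr ur; rewrite big_cons IH // in_cons.
have [<-|ne] := eqVneq x m0.
  by rewrite mulr1 (negPf xr) addr0.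
by rewrite mulr0 add0r.
Qed.

Section MP.
Variable (n : nat) (A : nzRingType).
Implicit Types (P : {mpoly A[n]}).

Lemma mcoeff_filt P (Q : pred 'X_{1..n}) m0 :
  (\sum_(m <- msupp P | Q m) P@_m *: 'X_[m])@_m0 = if Q m0 then P@_m0 else 0.
Proof.
rewrite raddf_sum /= big_mkcond /=.
rewrite (eq_bigr (fun m => (if Q m then P@_m else 0) * (m == m0)%:R)); last first.
  by move=> m _; case: (Q m); rewrite ?mcoeffZ ?mcoeffX ?mul0r. 
rewrite sum_pick ?msupp_uniq //; case: ifP => // /negbT.
by move/memN_msupp_eq0 => ->; case: (Q m0).
Qed.

Lemma mcoeff_full P m0 : (\sum_(m <- msupp P) P@_m *: 'X_[m])@_m0 = P@_m0.
Proof. by rewrite -mpolyE. Qed.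
End MP.

Section C.
Variable (n : nat) (A : comNzRingType).
Implicit Types (P Q : {mpoly A[n]}).

Lemma c0E P : P@_0 = meval (fun _ => 0) P.
Proof.
rewrite mevalE (eq_bigr (fun m => P@_m * (m == 0%MM)%:R)).
  by rewrite sum_pick ?msupp_uniq //; case: ifP => // /negbT /memN_msupp_eq0.
move=> m _; congr (_ * _).
have [->|nz] := eqVneq m 0%MM.
  by rewrite big1 // => i _; rewrite mnm0E expr0.
have [i hi] : exists i, m i != 0%N.
  apply/existsP; apply: contraNT nz; rewrite negb_exists => /forallP H.
  by apply/eqP/mnmP => i; rewrite mnm0E; move: (H i); rewrite negbK => /eqP.
rewrite (bigD1 i) //= expr0n (negPf hi) mul0r //.
Qed.

Lemma c0M P Q : (P * Q)@_0 = P@_0 * Q@_0.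
Proof. by rewrite !c0E mevalM. Qed.

Lemma c1E P i : P@_U_(i) = (P^`M(i))@_0.
Proof. by rewrite mcoeff_mderiv add0m mnm0E. Qed.

Lemma c1M P Q i : (P * Q)@_U_(i) = P@_0 * Q@_U_(i) + P@_U_(i) * Q@_0.
Proof. by rewrite !c1E mderivM mcoeffD !c0M addrC. Qed.

Lemma c0X P k : (P ^+ k)@_0 = P@_0 ^+ k.
Proof. by elim: k => [|k IH]; rewrite ?expr0 ?mcoeff1 ?eqxx // !exprS c0M IH. Qed.

Lemma c1X P k i : (P ^+ k)@_U_(i) = (P@_0 ^+ k.-1 * P@_U_(i)) *+ k.
Proof.
elim: k => [|k IH]; first by rewrite expr0 mcoeff1 mnm1_eq0 mulr0n.
rewrite exprS c1M IH c0X /=; case: k IH => [|k] _ /=.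
  by rewrite expr0 mulr0n mulr0 add0r mul1r mulr1n mulr1.
by rewrite mulrnAr mulrA -exprS [P@_U_(i) * _]mulrC [in RHS]mulrSr.
Qed.
End C.
Section D.
Variable k : fieldType.
Implicit Types (P : {mpoly {poly k}[2]}).

Lemma dcont_dvd P m : m \in msupp P -> dcont P %| P@_m.
Proof.
rewrite /dcont; elim: (msupp P) => [|x s IH] //=.
rewrite in_cons big_cons => /orP[/eqP->|/IH]; first exact: dvdp_gcdl.
by apply: dvdp_trans; apply: dvdp_gcdr.
Qed.

Lemma dvd_dcont d P : (forall m, m \in msupp P -> d %| P@_m) -> d %| dcont P.
Proof.
rewrite /dcont; elim: (msupp P) => [|x s IH] H /=; first by rewrite big_nil dvdp0.
rewrite big_cons dvdp_gcd H ?mem_head // IH // => m ms; apply: H.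
by rewrite in_cons ms orbT.
Qed.

Lemma prim_wit (pi : {poly k}) P : (1 < size pi)%N -> primitive P ->
  exists m, m \in msupp P /\ ~~ (pi %| P@_m).
Proof.
move=> spi pr; case: (boolP (all (fun m => pi %| P@_m) (msupp P))) => [/allP H|].
  have : pi %| dcont P by apply: dvd_dcont.
  rewrite (eqp_dvdr _ pr) dvdp1 => /eqP sz.
  by rewrite sz in spi.
by case/allPn => m ms nd; exists m.
Qed.
End D.

Section Red.
Variable k : fieldType.
Variable pi : {poly k}.
Hypothesis hI : monic_irreducible_poly pi.
Definition kap := {poly %/ pi with hI}.
Definition rho (a : {poly k}) : kap := in_qpoly pi a.
Lemma rho_is_zmod : zmod_morphism rho.
Proof. by move=> a b; rewrite /rho rmorphB. Qed.
HB.instance Definition _ := GRing.isZmodMorphism.Build {poly k} kap rho rho_is_zmod.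
Lemma rho_is_mul : monoid_morphism rho.
Proof. by split; rewrite /rho ?rmorph1 // => a b; rewrite rmorphM. Qed.
HB.instance Definition _ := GRing.isMonoidMorphism.Build {poly k} kap rho rho_is_mul.
Lemma rho_eq0 a : (rho a == 0) = (pi %| a).
Proof.
rewrite dvdpE /Pdiv.Ring.rdvdp /rho -val_eqE /=.
have -> : mk_monic pi = pi by apply: mk_monicE.
by [].
Qed.

Variables (p q : nat).
Definition wt (i : 'I_2) : nat := if i == yvar then p else q.
Notation S := {mpoly kap[2]}.
Definition fPhi (c : {poly k}) : {poly S} := ((rho c)%:MP)%:P.
Lemma fPhi_is_zmod : zmod_morphism fPhi.
Proof. by move=> a b; rewrite /fPhi !rmorphB. Qed.
HB.instance Definition _ := GRing.isZmodMorphism.Build {poly k} {poly S} fPhi fPhi_is_zmod.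
Lemma fPhi_is_mul : monoid_morphism fPhi.
Proof. by split; rewrite /fPhi ?rmorph1 // => a b; rewrite !rmorphM. Qed.
HB.instance Definition _ := GRing.isMonoidMorphism.Build {poly k} {poly S} fPhi fPhi_is_mul.
Definition hPhi (i : 'I_2) : {poly S} := ('X_i)%:P * 'X^(wt i).
Definition Phi (P : {mpoly {poly k}[2]}) : {poly S} := mmap fPhi hPhi P.

Lemma lift00 : lift ord0 ord0 = zvar :> 'I_2. Proof. by apply/val_inj. Qed.

Lemma gen_mon (A : comNzRingType) (u v t : A) a b pp qq :
  (u * t ^+ pp) ^+ a * (v * t ^+ qq) ^+ b = u ^+ a * v ^+ b * t ^+ (pp * a + qq * b).
Proof. by rewrite !exprMn -!exprM exprD mulrACA. Qed.

Lemma mmap1_Phi m : mmap1 hPhi m = ('X_[m] : S)%:P * 'X^(mwdeg p q m).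
Proof.
rewrite /mmap1 mpolyXE_id !big_ord_recl !big_ord0 !mulr1 lift00 /hPhi /wt /mwdeg.
have -> : (zvar == yvar) = false by [].
rewrite eqxx gen_mon [(p * _)%N]mulnC [(q * _)%N]mulnC.
by rewrite rmorphM !rmorphXn.
Qed.

Lemma PhiCoef P d m : ((Phi P)`_d)@_m = (mwdeg p q m == d)%:R * rho (P@_m).
Proof.
rewrite /Phi /mmap coef_sum raddf_sum /=.
rewrite (eq_bigr (fun m' => ((mwdeg p q m' == d)%:R * rho P@_m') * (m' == m)%:R)); last first.
  move=> m' _; rewrite mmap1_Phi /fPhi mulrA -rmorphM coefMXn coefC.
  case: ltnP => [lt|le].
    by rewrite mcoeff0 (_ : (mwdeg p q m' == d) = false) ?mul0r // gtn_eqF.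
  rewrite subn_eq0; have [eq|ne] := eqVneq (mwdeg p q m') d; last first.
    by rewrite (_ : (d <= mwdeg p q m')%N = false) ?mcoeff0 ?mul0r //; apply/negbTE; rewrite -ltnNge ltn_neqAle ne le.
  by rewrite eq leqnn mcoeffCM mcoeffX mul1r.
rewrite sum_pick ?msupp_uniq //; case: ifP => // /negbT /memN_msupp_eq0 ->.
by rewrite rmorph0 mulr0.
Qed.

Lemma Phi_size_le P B : (forall m, m \in msupp P -> (mwdeg p q m < B)%N) -> (size (Phi P) <= B)%N.
Proof.
move=> H; apply/leq_sizeP => j Bj; apply/mpolyP => m; rewrite PhiCoef mcoeff0.
case: (boolP (m \in msupp P)) => [/H lt|/memN_msupp_eq0 ->]; last by rewrite rmorph0 mulr0.
by rewrite (_ : (_ == j) = false) ?mul0r //; apply/negbTE; rewrite neq_ltn (leq_trans lt Bj).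
Qed.

Lemma Phi_coef_neq0 P m : ~~ (pi %| P@_m) -> (Phi P)`_(mwdeg p q m) != 0.
Proof.
move=> nd; apply/eqP => /(congr1 (mcoeff m)); rewrite PhiCoef mcoeff0 eqxx mul1r => /eqP.
by rewrite rho_eq0 (negPf nd).
Qed.

Lemma size_gt_coef (A : nzRingType) (P : {poly A}) i : P`_i != 0 -> (i < size P)%N.
Proof. by move=> nz; rewrite ltnNge; apply: contra nz => le; rewrite nth_default. Qed.

Lemma PhiZ c P : Phi (c *: P) = fPhi c * Phi P.
Proof. by rewrite /Phi mmapZ. Qed.
Lemma PhiD P Q : Phi (P + Q) = Phi P + Phi Q.
Proof. by rewrite /Phi rmorphD. Qed.
Lemma PhiX P i : Phi (P ^+ i) = Phi P ^+ i.
Proof. by rewrite /Phi rmorphXn. Qed.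
Lemma Phi_sum I (r : seq I) (F : I -> {mpoly {poly k}[2]}) : Phi (\sum_(i <- r) F i) = \sum_(i <- r) Phi (F i).
Proof. by rewrite /Phi rmorph_sum. Qed.

Lemma key f g W D al (be : nat -> {poly k}) N h :
  (forall m, m \in msupp f -> (mwdeg p q m <= W)%N) ->
  (exists m, m \in msupp f /\ mwdeg p q m = W /\ ~~ (pi %| f@_m)) ->
  (forall m, m \in msupp g -> (mwdeg p q m < W)%N) ->
  (exists m, m \in msupp g /\ ~~ (pi %| g@_m)) ->
  g@_0 = 0 ->
  pi %| D ->
  D *: h = al *: g + \sum_(i < N) be i *: f ^+ i ->
  pi %| al /\ forall i, (i < N)%N -> pi %| be i.
Proof.
move=> hf1 [mf [mfs [mfW mfn]]] hg1 [mg [mgs mgn]] g0 piD E.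
have W0 : (0 < W)%N by apply: leq_trans (hg1 _ mgs).
move/(congr1 Phi): E; rewrite PhiZ PhiD PhiZ Phi_sum.
have -> : fPhi D = 0 by rewrite /fPhi (eqP (_ : rho D == 0)) ?rho_eq0 // !rmorph0.
rewrite mul0r.
set T := Phi f; set G := Phi g.
pose pol := \poly_(i < N) ((rho (be i))%:MP : S).
have -> : \sum_(i < N) Phi (be i *: f ^+ i) = pol \Po T.
  rewrite /comp_poly (horner_coef_wide (n := N)); last by rewrite size_map_polyC size_poly.
  apply: eq_bigr => i _; rewrite PhiZ PhiX coef_map /= coef_poly ltn_ord //.
move=> E.
have sT : size T = W.+1.
  apply/eqP; rewrite eqn_leq; apply/andP; split.
    by apply: Phi_size_le => m /hf1.
  by rewrite -mfW; apply: size_gt_coef; apply: Phi_coef_neq0.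
have sG : (size G <= W)%N by apply: Phi_size_le.
have spol : (size pol <= 1)%N.
  rewrite leqNgt; apply/negP => sp.
  have : (size (pol \Po T)).-1 = ((size pol).-1 * (size T).-1)%N by rewrite size_comp_poly.
  have -> : pol \Po T = - (fPhi al * G) by apply/eqP; rewrite -addr_eq0 addrC -E.
  rewrite size_polyN sT /= => e.
  have : (size (fPhi al * G)%R <= W)%N.
    by rewrite /fPhi mul_polyC (leq_trans (size_scale_leq _ _)).
  have : (W <= (size pol).-1 * W)%N by rewrite leq_pmull // -ltnS prednK // (leq_trans _ sp).
  rewrite -e; case: (size (fPhi al * G)) => [|s] /=; first by rewrite leqn0 => /eqP W00; rewrite W00 in W0.
  by move=> a b; move: (leq_trans b a); rewrite ltnn.
have polhi i : (0 < i)%N -> (i < N)%N -> pi %| be i.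
  move=> i0 iN; have := nth_default 0 (leq_trans spol i0).
  rewrite coef_poly iN => /eqP; rewrite mpolyC_eq0 rho_eq0 //.
move: E; rewrite (size1_polyC spol) comp_polyC => E.
have : ((fPhi al * G + (pol`_0)%:P)`_0)@_0 = 0.
  by rewrite -E coef0 mcoeff0.
rewrite coefD mcoeffD coefC /=.

rewrite /fPhi coefCM mcoeffCM /G PhiCoef g0 rmorph0 mulr0 mulr0 add0r => p0.
have be0 : (0 < N)%N -> pi %| be 0.
  by move=> N0; move: p0; rewrite coef_poly N0 mpolyCK => /eqP; rewrite rho_eq0.
have pol0 : pol`_0 = 0.
  rewrite coef_poly; case: ifP => // N0; apply/eqP; rewrite mpolyC_eq0 rho_eq0; exact: be0.
split; last by move=> [|i] iN; [apply: be0| apply: polhi].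
move: E; rewrite pol0 addr0 => /esym/eqP; rewrite mulf_eq0 => /orP[|/eqP G0].
  by rewrite polyC_eq0 mpolyC_eq0 rho_eq0.
by move: (Phi_coef_neq0 g mg mgn); rewrite -/G G0 coef0 eqxx.
Qed.
End Red.


Lemma auto_lin (k : fieldType) (pi : {poly k}) (zeta : {mpoly {poly k}[2]} -> {mpoly {poly k}[2]}) :
  (1 < size pi)%N -> kx_automorphism zeta ->
  ~ (pi %| (zeta 'X_yvar)@_U_(yvar) /\ pi %| (zeta 'X_yvar)@_U_(zvar)).
Proof.
move=> spi [zD zM z1 zC [zi zK ziK]] [hy hz].
set H2 := zeta 'X_zvar.
pose Sp (P : {mpoly {poly k}[2]}) := exists t : {poly k},
  pi %| P@_U_(yvar) - t * H2@_U_(yvar) /\ pi %| P@_U_(zvar) - t * H2@_U_(zvar).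
have SpD P Q : Sp P -> Sp Q -> Sp (P + Q).
  move=> [t1 [a1 b1]] [t2 [a2 b2]]; exists (t1 + t2); rewrite !mcoeffD.
  split.
    have -> : P@_U_(yvar) + Q@_U_(yvar) - (t1 + t2) * H2@_U_(yvar) =
      (P@_U_(yvar) - t1 * H2@_U_(yvar)) + (Q@_U_(yvar) - t2 * H2@_U_(yvar)) by ring.
    by rewrite dvdp_add.
  have -> : P@_U_(zvar) + Q@_U_(zvar) - (t1 + t2) * H2@_U_(zvar) =
    (P@_U_(zvar) - t1 * H2@_U_(zvar)) + (Q@_U_(zvar) - t2 * H2@_U_(zvar)) by ring.
  by rewrite dvdp_add.
have SpM P Q : Sp P -> Sp Q -> Sp (P * Q).
  move=> [t1 [a1 b1]] [t2 [a2 b2]]; exists (P@_0 * t2 + Q@_0 * t1); rewrite !c1M.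
  split.
    have -> : P@_0 * Q@_U_(yvar) + P@_U_(yvar) * Q@_0 - (P@_0 * t2 + Q@_0 * t1) * H2@_U_(yvar) =
      P@_0 * (Q@_U_(yvar) - t2 * H2@_U_(yvar)) + Q@_0 * (P@_U_(yvar) - t1 * H2@_U_(yvar)) by ring.
    by rewrite dvdp_add // dvdp_mull.
  have -> : P@_0 * Q@_U_(zvar) + P@_U_(zvar) * Q@_0 - (P@_0 * t2 + Q@_0 * t1) * H2@_U_(zvar) =
    P@_0 * (Q@_U_(zvar) - t2 * H2@_U_(zvar)) + Q@_0 * (P@_U_(zvar) - t1 * H2@_U_(zvar)) by ring.
  by rewrite dvdp_add // dvdp_mull.
have SpC c : Sp (c%:MP).
  by exists 0; rewrite !mcoeffC !mnm1_eq0 !mulr0 !mul0r !subr0 dvdp0.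
have SpY : Sp (zeta 'X_yvar) by exists 0; rewrite !mul0r !subr0.
have SpZ : Sp H2 by exists 1; rewrite !mul1r !subrr dvdp0.
have SpXi i : Sp (zeta 'X_i).
  case: i => -[|[|//]] lt.
    by have -> : Ordinal lt = yvar by apply/val_inj.
  by have -> : Ordinal lt = zvar by apply/val_inj.
have zX P n : zeta (P ^+ n) = zeta P ^+ n.
  by elim: n => [|n IH]; rewrite ?expr0 ?z1 // !exprS zM IH.
have SpX P n : Sp P -> Sp (P ^+ n).
  by move=> sP; elim: n => [|n IH]; rewrite ?expr0 -?mpolyC1 // exprS; apply: (SpM).
have z0 : zeta 0 = 0.
  by apply: (addrI (zeta 0)); rewrite addr0 -zD addr0.
have SpAll P : Sp (zeta P).
  elim/mpolyind: P => [|c m P _ _ IH]; first by rewrite z0 -(mpolyC0 _) ; apply: (SpC).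
  rewrite zD -mul_mpolyC zM zC; apply: (SpD) => //; apply: (SpM) => //.
  rewrite mpolyXE_id !big_ord_recl big_ord0 mulr1 zM !zX.
  by apply: (SpM); apply: (SpX).
have [t [a1 b1]] : Sp 'X_yvar by rewrite -[X in Sp X]ziK.
have [s [a2 b2]] : Sp 'X_zvar by rewrite -[X in Sp X]ziK.
move: a1 b1 a2 b2; rewrite !mcoeffXU eqxx /= => a1 b1 a2 b2.
have : pi %| 1.
  have -> : (1 : {poly k}) = (1 - t * H2@_U_(yvar)) + t * H2@_U_(yvar) * (1 - s * H2@_U_(zvar))
     + (0 - t * H2@_U_(zvar)) * (0 - s * H2@_U_(yvar)) by ring.
  by apply: dvdp_add; [apply: dvdp_add => //; apply: dvdp_mull | apply: dvdp_mulr].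
by rewrite dvdp1 => /eqP sz; rewrite sz in spi.
Qed.


Lemma irr_factor (k : fieldType) (a : {poly k}) :
  (1 < size a)%N -> exists pi, monic_irreducible_poly pi /\ pi %| a.
Proof.
have [n le] := ubnP (size a); elim: n a le => // n IH a sa s1.
have a0 : a != 0 by rewrite -size_poly_gt0 (ltn_trans _ s1).
case: (classic (irreducible_poly a)) => [ia|nia].
  have lc0 : lead_coef a != 0 by rewrite lead_coef_eq0.
  exists ((lead_coef a)^-1 *: a); split; last by rewrite dvdpZl // invr_eq0.
  split; last by rewrite monicE lead_coefZ mulVf.
  split; first by rewrite size_scale // invr_eq0.
  move=> r sr; rewrite !(eqp_dvdr _ (eqp_scale _ _)) ?invr_eq0 // => ra.
  by apply: eqp_trans (ia _ sr ra) _; rewrite eqp_sym eqp_scale // invr_eq0.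
have [r [sr [ra nra]]] : exists r : {poly k}, size r != 1%N /\ r %| a /\ ~ (r %= a).
  apply: NNPP => H; apply: nia; split => // r sr ra.
  by apply: NNPP => nr; apply: H; exists r.
have r0 : r != 0 by apply/eqP => r0; move: ra; rewrite r0 dvd0p; apply/negP.
have sr1 : (1 < size r)%N.
  by rewrite ltn_neqAle eq_sym sr size_poly_gt0 r0.
have srl : (size r < size a)%N.
  rewrite ltn_neqAle dvdp_leq // andbT; apply/negP => /eqP e.
  by apply: nra; rewrite -dvdp_size_eqp // e.
have [pi [hpi pir]] := IH r (leq_trans srl (ltnSE sa)) sr1.
by exists pi; split => //; apply: dvdp_trans ra.
Qed.


Section W.
Variables (k : fieldType) (p q : nat).
Implicit Types (P : {mpoly {poly k}[2]}).

Lemma wdeg_ge P m : m \in msupp P -> (mwdeg p q m <= wdeg p q P)%N.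
Proof. by move=> ms; rewrite /wdeg (leq_bigmax_seq (P := xpredT) _ ms). Qed.

Lemma max_attained (T : eqType) (s : seq T) (F : T -> nat) :
  s != [::] -> exists2 x, x \in s & \max_(y <- s) F y = F x.
Proof.
elim: s => [|x s IH] // _; rewrite big_cons.
case: s IH => [|y s] IH.
  by exists x; rewrite ?mem_head // big_nil maxn0.
have [z zs ->] := IH isT.
case: (leqP (F z) (F x)) => le.
  by exists x; rewrite ?mem_head.
by exists z; rewrite // in_cons zs orbT.
Qed.

Lemma wtop_coef P m : (wtop p q P)@_m = if mwdeg p q m == wdeg p q P then P@_m else 0.
Proof. by rewrite /wtop mcoeff_filt. Qed.

Lemma wdeg_wtop_le P : (wdeg p q (wtop p q P) <= wdeg p q P)%N.
Proof.
apply/bigmax_leqP_seq => m ms _; move: ms; rewrite mcoeff_msupp wtop_coef.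
by case: (mwdeg p q m =P wdeg p q P) => [->|_] //; rewrite eqxx.
Qed.

Lemma wdeg_le_wtop P : (wdeg p q P <= wdeg p q (wtop p q P))%N.
Proof.
case: (eqVneq (msupp P) [::]) => [e|ne]; first by rewrite /wdeg e big_nil.
have [m ms e] := @max_attained _ _ (mwdeg p q) ne.
rewrite /wdeg e; apply: wdeg_ge; rewrite mcoeff_msupp wtop_coef /wdeg e eqxx.
by rewrite -mcoeff_msupp.
Qed.
End W.


Section FracRep.
Local Open Scope quotient_scope.
Lemma frac_rep (R : idomainType) (x : {fraction R}) : exists a b, b != 0 /\ x = tofrac a / tofrac b.
Proof.
elim/quotW: x => r; exists \n_r, \d_r; split; first exact: denom_ratioP.
unlock FracField.tofrac.
change (\pi_{fraction R} r = FracField.mul (\pi_{fraction R} (Ratio \n_r 1)) (FracField.inv (\pi_{fraction R} (Ratio \d_r 1)))).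
rewrite -FracField.pi_inv -FracField.pi_mul.
apply/eqmodP; rewrite /= FracField.equivfE /FracField.mulf /FracField.invf /=.
rewrite !numden_Ratio ?oner_neq0 ?mul1r ?mulr1 ?denom_ratioP // mulrC eqxx. all: by rewrite ?mul1r ?denom_ratioP.
Qed.

End FracRep.


Section Integ.
Variables (k : fieldType) (pi : {poly k}).
Hypothesis spi : (1 < size pi)%N.
Notation tf := (@tofrac {poly k}).

Definition integ (x : {fraction {poly k}}) :=
  exists a b, coprimep b pi /\ x = tf a / tf b.

Lemma cop_neq0 b : coprimep b pi -> b != 0.
Proof.
apply: contraTneq => ->; rewrite coprime0p -size_poly_eq1.
by rewrite neq_ltn spi orbT.
Qed.

Lemma integ_tf a : integ (tf a).
Proof. by exists a, 1; rewrite coprime1p rmorph1 divr1. Qed.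

Lemma integM x y : integ x -> integ y -> integ (x * y).
Proof.
move=> [a1 [b1 [c1 ->]]] [a2 [b2 [c2 ->]]]; exists (a1 * a2), (b1 * b2).
by rewrite coprimepMl c1 c2 !rmorphM invfM mulrACA.
Qed.

Lemma integD x y : integ x -> integ y -> integ (x + y).
Proof.
move=> [a1 [b1 [c1 ->]]] [a2 [b2 [c2 ->]]]; exists (a1 * b2 + a2 * b1), (b1 * b2).
rewrite coprimepMl c1 c2; split => //.
have n1 : tf b1 != 0 by rewrite tofrac_eq0 cop_neq0.
have n2 : tf b2 != 0 by rewrite tofrac_eq0 cop_neq0.
rewrite rmorphD !rmorphM /=; exact: (addf_div (tf a1) (tf a2) n1 n2).
Qed.

Lemma integ_sum I (r : seq I) (F : I -> {fraction {poly k}}) :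
  (forall i, integ (F i)) -> integ (\sum_(i <- r) F i).
Proof.
move=> H; apply: (big_ind integ) => //; last by move=> *; apply: integD.
by rewrite -(rmorph0 tf); apply: integ_tf.
Qed.

Lemma integMn x n : integ x -> integ (x *+ n).
Proof. by move=> ix; rewrite -mulr_natr; apply: integM => //; rewrite -(rmorph_nat tf); apply: integ_tf. Qed.

Lemma integ_dvd x r : integ x -> tf r = tf pi * x -> pi %| r.
Proof.
move=> [a [b [cb ->]]] e.
have nb : tf b != 0 by rewrite tofrac_eq0 cop_neq0.
have : tf (r * b) = tf (pi * a).
  rewrite tofracM e -mulrA (divfK nb); exact: (esym (tofracM pi a)).
move/eqP; rewrite tofrac_eq => /eqP e2.
have cb' : coprimep pi b by rewrite coprimep_sym.
by rewrite -(Gauss_dvdpl _ cb') e2 dvdp_mulr // dvdpp.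
Qed.
End Integ.

Lemma common_den (R : idomainType) (A : {fraction R}) (c : nat -> {fraction R}) N :
  exists D al (be : nat -> R), [/\ D != 0, A * tofrac D = tofrac al &
     forall i, (i < N)%N -> c i * tofrac D = tofrac (be i)].
Proof.
elim: N => [|N [D [al [be [D0 eA eb]]]]].
  have [a [b [b0 ->]]] := frac_rep _ A.
  have nb : tofrac b != 0 by rewrite tofrac_eq0.
  by exists b, a, (fun _ => 0); split => //; rewrite (divfK nb).
have [a [b [b0 ec]]] := frac_rep _ (c N).
have nb : tofrac b != 0 by rewrite tofrac_eq0.
exists (D * b), (al * b), (fun i => if (i < N)%N then be i * b else a * D); split.
- by rewrite mulf_neq0.
- by rewrite tofracM mulrA eA tofracM.
move=> i; rewrite ltnS leq_eqVlt => /orP[/eqP ->|iN].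
  by rewrite ltnn ec tofracM [tofrac D * _]mulrC mulrA (divfK nb) tofracM.
by rewrite iN tofracM mulrA eb // tofracM.
Qed.


Lemma divf_cancel (F : fieldType) (x y z : F) : z != 0 -> (x * z) / (y * z) = x / y.
Proof. by move=> z0; rewrite invfM mulrACA divff // mulr1. Qed.

Lemma descent (k : fieldType) (pi : {poly k}) (hI : monic_irreducible_poly pi) (p q : nat)
  (f g : {mpoly {poly k}[2]}) W h :
  (forall m, m \in msupp f -> (mwdeg p q m <= W)%N) ->
  (exists m, m \in msupp f /\ mwdeg p q m = W /\ ~~ (pi %| f@_m)) ->
  (forall m, m \in msupp g -> (mwdeg p q m < W)%N) ->
  (exists m, m \in msupp g /\ ~~ (pi %| g@_m)) ->
  g@_0 = 0 ->
  forall N D al (be : nat -> {poly k}), D != 0 ->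
  D *: h = al *: g + \sum_(i < N) be i *: f ^+ i ->
  @integ k pi (tofrac al / tofrac D) /\ forall i, (i < N)%N -> @integ k pi (tofrac (be i) / tofrac D).
Proof.
move=> H1 H2 H3 H4 H5 N D; have [n le] := ubnP (size D).
elim: n D le => // n IH D sD al be D0 E.
case: (boolP (coprimep D pi)) => cD.
  by split; [exists al, D | move=> i _; exists (be i), D].
have spi : (1 < size pi)%N by case: hI => -[].
move: cD; rewrite coprimep_sym (irreducible_poly_coprime _ hI.1) negbK => piD.
have [pa pb] := @key k pi hI p q f g W D al be N h H1 H2 H3 H4 H5 piD E.
pose D' := D %/ pi; pose al' := al %/ pi; pose be' i := be i %/ pi.
have eD : D = D' * pi by rewrite divpK.
have eal : al = al' * pi by rewrite divpK.
have pi0 : pi != 0 by rewrite -size_poly_gt0 (ltn_trans _ spi).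
have D'0 : D' != 0 by apply: contraNneq D0 => e; rewrite eD e mul0r.
have E' : D' *: h = al' *: g + \sum_(i < N) be' i *: f ^+ i.
  apply: (mulfI (_ : pi%:MP != 0)); first by rewrite mpolyC_eq0.
  rewrite !mul_mpolyC scalerDr scaler_sumr !scalerA [pi * D']mulrC -eD [pi * al']mulrC -eal E.
  congr (_ + _); apply: eq_bigr => i _; rewrite scalerA mulrC divpK //; exact: pb.
have sD' : (size D' < n)%N.
  apply: leq_trans (ltnSE sD); rewrite eD size_mul // -subn1 -addnBA ?subn1 //; last by apply: ltnW.
  by rewrite -[X in (X < _)%N]addn0 ltn_add2l -subn1 subn_gt0.
have [i1 i2] := IH D' sD' al' be' D'0 E'.
have tpi : tofrac pi != 0 by rewrite tofrac_eq0.
split.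
  by rewrite eal eD !tofracM (divf_cancel _ _ _ _ tpi).
move=> i iN; rewrite eD tofracM -(divpK (pb i iN)) tofracM (divf_cancel _ _ _ _ tpi); exact: i2.
Qed.


Section T.
Variable k : fieldType.
Implicit Types P Q : {mpoly {poly k}[2]}.

Lemma toK_coef P m : (toK P)@_m = tofrac (P@_m).
Proof. by rewrite /toK mcoeff_map_mpoly. Qed.

Lemma toK_inj P Q : toK P = toK Q -> P = Q.
Proof.
move=> e; apply/mpolyP => m.
apply/eqP; rewrite -tofrac_eq; apply/eqP; rewrite -!toK_coef e.
exact: erefl.
Qed.

Lemma toKD P Q : toK (P + Q) = toK P + toK Q.
Proof. by rewrite /toK raddfD. Qed.
Lemma toKZ c P : toK (c *: P) = tofrac c *: toK P.
Proof. by rewrite /toK map_mpolyZ. Qed.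
Lemma toKX P i : toK (P ^+ i) = toK P ^+ i.
Proof. by rewrite /toK rmorphXn. Qed.
Lemma toK_sum I (r : seq I) (F : I -> {mpoly {poly k}[2]}) : toK (\sum_(i <- r) F i) = \sum_(i <- r) toK (F i).
Proof. by rewrite /toK raddf_sum. Qed.
End T.


Lemma lin_coef (k : fieldType) (P : {mpoly {poly k}[2]}) i : (linpart P)@_U_(i) = P@_U_(i).
Proof. by rewrite /linpart mcoeff_filt mdeg1. Qed.

Lemma pi_lin (k : fieldType) (pi : {poly k}) (P : {mpoly {poly k}[2]}) i :
  pi %| dcont (linpart P) -> pi %| P@_U_(i).
Proof.
move=> H; rewrite -lin_coef; case: (eqVneq ((linpart P)@_U_(i)) 0) => [->|nz]; first exact: dvdp0.
by apply: dvdp_trans H _; apply: dcont_dvd; rewrite mcoeff_msupp.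
Qed.

Lemma coef_main (k : fieldType) (u1 v0 : {fraction {poly k}}) (F0 : {poly {fraction {poly k}}})
  (G Fp : {mpoly {fraction {poly k}}[2]}) j :
  (u1 *: (v0 *: G + peval F0 Fp))@_U_(j) = (u1 * v0) * G@_U_(j) +
    (\sum_(i < size F0) (u1 * F0`_i) * (Fp@_0 ^+ i.-1 *+ i)) * Fp@_U_(j).
Proof.
rewrite mcoeffZ mcoeffD mcoeffZ /peval raddf_sum /= mulrDr mulrA; congr (_ + _).
rewrite mulr_sumr mulr_suml; apply: eq_bigr => i _; rewrite mcoeffZ c1X.
by rewrite -mulrnAl !mulrA.
Qed.

Lemma coefU (k : fieldType) (H G Fp : {mpoly {poly k}[2]}) u1 v0 F0 j :
  toK H = u1 *: (v0 *: toK G + peval F0 (toK Fp)) ->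
  tofrac (H@_U_(j)) = (u1 * v0) * tofrac (G@_U_(j)) +
    (\sum_(i < size F0) (u1 * F0`_i) * (tofrac (Fp@_0) ^+ i.-1 *+ i)) * tofrac (Fp@_U_(j)).
Proof.
move=> e; rewrite -(toK_coef _ G U_(j)) -(toK_coef _ Fp U_(j)) -(toK_coef _ Fp 0%MM).
rewrite -(toK_coef _ H) e; exact: coef_main.
Qed.

Theorem proposition4p13 (k : fieldType) (f g : {mpoly {poly k}[2]}) :
  [pchar k] =i pred0 ->
  (1 < size (gcdp (dcont (linpart f)) (dcont (linpart g))))%N ->
  primitive g ->
  g@_0 = 0 ->
  (exists p q : nat,
      (p, q) != (0%N, 0%N) /\
      primitive (wtop p q f) /\
      (wdeg p q (wtop p q g) < wdeg p q (wtop p q f))%N) ->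
  ~ exists (zeta : {mpoly {poly k}[2]} -> {mpoly {poly k}[2]})
           (u1 v0 : {fraction {poly k}}) (F0 : {poly {fraction {poly k}}}),
      kx_automorphism zeta /\
      toK (zeta 'X_yvar) = u1 *: (v0 *: toK g + peval F0 (toK f)).
Proof.
move=> _ hgcd primg g0 [p [q [_ [primf hdeg]]]] [zeta [u1 [v0 [F0 [aut E]]]]].
have [pi [hI pidvd]] := irr_factor _ _ hgcd.
have spi : (1 < size pi)%N by case: hI => -[].
have pf : pi %| dcont (linpart f) by apply: dvdp_trans pidvd (dvdp_gcdl _ _).
have pg : pi %| dcont (linpart g) by apply: dvdp_trans pidvd (dvdp_gcdr _ _).
pose W := wdeg p q f.
have hf1 : forall m, m \in msupp f -> (mwdeg p q m <= W)%N by move=> m; exact: wdeg_ge.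
have hf2 : exists m, m \in msupp f /\ mwdeg p q m = W /\ ~~ (pi %| f@_m).
  have [m [_ nd]] := prim_wit _ _ _ spi primf.
  move: nd; rewrite wtop_coef; case: eqP => [e nd|_]; last by rewrite dvdp0.
  exists m; split => //; rewrite mcoeff_msupp; apply: contra nd => /eqP ->; exact: dvdp0.
have hg1 : forall m, m \in msupp g -> (mwdeg p q m < W)%N.
  move=> m ms; apply: (leq_ltn_trans (wdeg_ge _ _ _ _ _ ms)).
  apply: (leq_ltn_trans (wdeg_le_wtop _ _ _ _)); apply: (leq_trans hdeg).
  exact: wdeg_wtop_le.
have hg2 := prim_wit _ _ _ spi primg.
set h := zeta 'X_yvar.
have [D [al [be [D0 eA eb]]]] := common_den _ (u1 * v0) (fun i => u1 * F0`_i) (size F0).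
have Eq : D *: h = al *: g + \sum_(i < size F0) be i *: f ^+ i.
  apply: (toK_inj _); rewrite toKZ toKD toKZ toK_sum E.
  have -> : \sum_(i < size F0) toK (be i *: f ^+ i) =
      \sum_(i < size F0) (tofrac D * u1) *: (F0`_i *: toK f ^+ i).
    apply: eq_bigr => i _; rewrite toKZ toKX -(eb i (ltn_ord i)) scalerA.
    by rewrite [u1 * _ * _]mulrC mulrA.
  rewrite -eA [u1 * v0 * _]mulrC /peval scalerA scalerDr scalerA.
  rewrite [_ *: \sum_(i < size F0) _]scaler_sumr !mulrA.
  exact: erefl.
have [ia ib] := descent _ _ hI _ _ _ _ _ _ hf1 hf2 hg1 hg2 g0 _ _ _ _ D0 Eq.
have nD : tofrac D != 0 by rewrite tofrac_eq0.
have iA : integ k pi (u1 * v0) by rewrite (canRL (mulfK nD) eA).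
have iB : forall i : 'I_(size F0), integ k pi (u1 * F0`_i).
  by move=> i; rewrite (canRL (mulfK nD) (eb i (ltn_ord i))); apply: ib.
have key j : pi %| h@_U_(j).
  have eU : tofrac (h@_U_(j)) = (u1 * v0) * tofrac (g@_U_(j)) +
    (\sum_(i < size F0) (u1 * F0`_i) * (tofrac (f@_0) ^+ i.-1 *+ i)) * tofrac (f@_U_(j)).
    exact: coefU.
  have [g' eg'] : exists g', g@_U_(j) = g' * pi by exists (g@_U_(j) %/ pi); rewrite divpK // pi_lin.
  have [f' ef'] : exists f', f@_U_(j) = f' * pi by exists (f@_U_(j) %/ pi); rewrite divpK // pi_lin.
  apply: (integ_dvd _ _ spi (u1 * v0 * tofrac g' +
     (\sum_(i < size F0) u1 * F0`_i * (tofrac (f@_0) ^+ i.-1 *+ i)) * tofrac f') _).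
    apply: (integD _ _ spi); apply: integM => //; try exact: integ_tf.
    apply: (integ_sum _ _ spi) => i; apply: integM => //; apply: integMn.
    rewrite -tofracXn; exact: integ_tf.
  rewrite eU eg' ef' !tofracM mulrDr !mulrA ![_ * tofrac pi]mulrC !mulrA.
  exact: erefl.
exact: (auto_lin _ _ _ spi aut (conj (key yvar) (key zvar))).
Qed.
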